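(* Let $\Sigma$ be a finite alphabet and let $p:\mathcal{Q}\to\mathcal{F}(B_\Sigma)$ be a functor of categories. Then $p$ is ULF and finitary if and only if $p$ is (up to isomorphism of categories over $\mathcal{F}(B_\Sigma)$) the functor associated to a bare nondeterministic finite-state automaton over $\Sigma$; that is, iff there exist finite sets $Q$ and $T$ and a function $\delta:T\to Q\times\Sigma\times Q$, and an isomorphism between $\mathcal{Q}$ and the free category on the graph with nodes $Q$ and an edge $t:q\to q'$ for each $t\in T$ with $\delta(t)=(q,a,q')$, under which $p$ corresponds to the functor sending each such edge $t$ to the letter $a$.
   Context: $B_\Sigma$ is the bouquet graph with one node $*$ and one loop $a:*\to *$ for each $a\in\Sigma$; its free category $\mathcal{F}(B_\Sigma)$ has one object, whose arrows are the words over $\Sigma$ with composition given by concatenation. The free category on a graph has the nodes as objects and finite paths as arrows. Composition is written diagrammatically. A functor $p:\mathcal{D}\to\mathcal{C}$ is ULF if for every arrow $\alpha$ of $\mathcal{D}$ and arrows $u,v$ of $\mathcal{C}$ with $p(\alpha)=uv$ there is a unique pair of arrows $\beta,\gamma$ of $\mathcal{D}$ with $\alpha=\beta\gamma$, $p(\beta)=u$, $p(\gamma)=v$. It is finitary if the fibers $p^{-1}(A)$ (objects over $A$) and $p^{-1}(w)$ (arrows over $w$) are finite for every object $A$ and arrow $w$ of $\mathcal{C}$. *)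

(* Defs.v *)
From Stdlib Require List.
From mathcomp Require Import all_boot.
Set Implicit Arguments. Unset Strict Implicit. Unset Printing Implicit Defensive.

Record Category := {
  Ob : Type;
  Hom : Ob -> Ob -> Type;
  cid : forall X, Hom X X;
  ccomp : forall X Y Z, Hom X Y -> Hom Y Z -> Hom X Z;   (* ccomp f g = "f g" *)
  ccomp_id_l : forall X Y (f : Hom X Y), ccomp (cid X) f = f;
  ccomp_id_r : forall X Y (f : Hom X Y), ccomp f (cid Y) = f;
  ccomp_assoc : forall X Y Z W (f : Hom X Y) (g : Hom Y Z) (h : Hom Z W),
      ccomp (ccomp f g) h = ccomp f (ccomp g h) }.
Arguments cid {c} X.
Arguments ccomp {c X Y Z}.

Record Functor (C D : Category) := {
  fob : Ob C -> Ob D;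
  fmor : forall X Y, Hom X Y -> Hom (fob X) (fob Y);
  fmor_id : forall X, fmor (cid X) = cid (fob X);
  fmor_comp : forall X Y Z (f : Hom X Y) (g : Hom Y Z),
      fmor (ccomp f g) = ccomp (fmor f) (fmor g) }.
Arguments fob {C D} f0 _ : rename.
Arguments fmor {C D} f0 {X Y} _ : rename.

Definition isomorphism (C D : Category) (F : Functor C D) : Prop :=
  bijective (fob F) /\ forall X Y : Ob C, bijective (@fmor C D F X Y).

Definition finite_type (A : Type) : Prop := exists l : list A, forall x, List.In x l.

Section Bouquet.
Variable Sigma : Type.
Definition FB : Category :=
  {| Ob := unit; Hom := fun _ _ => seq Sigma; cid := fun _ => [::];
     ccomp := fun _ _ _ u v => u ++ v;
     ccomp_id_l := fun _ _ f => cat0s f;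
     ccomp_id_r := fun _ _ f => cats0 f;
     ccomp_assoc := fun _ _ _ _ f g h => esym (catA f g h) |}.
End Bouquet.

Definition ULF (Sigma : Type) (C : Category) (p : Functor C (FB Sigma)) : Prop :=
  forall (X Y : Ob C) (alpha : Hom X Y) (u v : seq Sigma),
    fmor p alpha = u ++ v ->
    exists! bg : {Z : Ob C & (Hom X Z * Hom Z Y)%type},
      [/\ ccomp (projT2 bg).1 (projT2 bg).2 = alpha,
          fmor p (projT2 bg).1 = u & fmor p (projT2 bg).2 = v].

Definition finitary (Sigma : Type) (C : Category) (p : Functor C (FB Sigma)) : Prop :=
  (forall A : Ob (FB Sigma), finite_type {X : Ob C | fob p X = A}) /\
  (forall w : seq Sigma,
      finite_type {X : Ob C & {Y : Ob C & {f : Hom X Y | fmor p f = w}}}).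

Section Automaton.
Variables (Sigma : Type) (Q T : finType) (delta : T -> Q * Sigma * Q).
Definition tsrc (t : T) : Q := (delta t).1.1.
Definition tlbl (t : T) : Sigma := (delta t).1.2.
Definition ttgt (t : T) : Q := (delta t).2.

Fixpoint is_path (q : Q) (s : seq T) (q' : Q) : bool :=
  match s with
  | [::] => q == q'
  | t :: s' => (tsrc t == q) && is_path (ttgt t) s' q'
  end.

Lemma is_path_cat q r q' s1 s2 :
  is_path q s1 r -> is_path r s2 q' -> is_path q (s1 ++ s2) q'.
Proof.
elim: s1 q => [|t s1 IH] q /=; first by move/eqP->.
by case/andP=> -> H1 H2; rewrite IH.
Qed.

Definition fpath (q q' : Q) := {s : seq T | is_path q s q'}.
Definition fid (q : Q) : fpath q q := exist _ [::] (eqxx q).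
Definition fcomp (q r q' : Q) (a : fpath q r) (b : fpath r q') : fpath q q' :=
  exist _ (proj1_sig a ++ proj1_sig b) (is_path_cat (proj2_sig a) (proj2_sig b)).

Lemma fpath_eq q q' (a b : fpath q q') : proj1_sig a = proj1_sig b -> a = b.
Proof.
case: a b => [s Hs] [s' Hs'] /= E; subst s'.
by rewrite (bool_irrelevance Hs Hs').
Qed.

Lemma fcomp_id_l q q' (a : fpath q q') : fcomp (fid q) a = a.
Proof. exact: fpath_eq. Qed.
Lemma fcomp_id_r q q' (a : fpath q q') : fcomp a (fid q') = a.
Proof. by apply: fpath_eq; rewrite /= cats0. Qed.
Lemma fcomp_assoc q1 q2 q3 q4 (a : fpath q1 q2) (b : fpath q2 q3) (c : fpath q3 q4) :
  fcomp (fcomp a b) c = fcomp a (fcomp b c).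
Proof. by apply: fpath_eq; rewrite /= catA. Qed.

Definition FreeAut : Category :=
  {| Ob := Q; Hom := fpath; cid := fid; ccomp := fcomp;
     ccomp_id_l := fcomp_id_l; ccomp_id_r := fcomp_id_r;
     ccomp_assoc := fcomp_assoc |}.

Definition aut_mor (q q' : Q) (a : fpath q q') : seq Sigma := map tlbl (proj1_sig a).

Definition AutFunctor : Functor FreeAut (FB Sigma) :=
  {| fob := (fun _ => tt) : Ob FreeAut -> Ob (FB Sigma);
     fmor := aut_mor;
     fmor_id := fun _ => erefl;
     fmor_comp := fun _ _ _ a b => map_cat tlbl (proj1_sig a) (proj1_sig b) |}.
End Automaton.

(* Main.v *)
Require Import Defs.
From mathcomp Require Import all_boot.
From Stdlib Require Import ClassicalEpsilon Eqdep.
Set Implicit Arguments. Unset Strict Implicit. Unset Printing Implicit Defensive.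

Definition ceq (A : Type) (x y : A) : bool :=
  if excluded_middle_informative (x = y) then true else false.

Lemma ceqP (A : Type) (x y : A) : reflect (x = y) (ceq x y).
Proof. by rewrite /ceq; case: excluded_middle_informative => H; constructor. Qed.

Lemma In_has (A : Type) (a : A) (l : seq A) : List.In a l -> has (ceq a) l.
Proof.
elim: l => [|x l IH] //= [->|H]; last by rewrite (IH H) orbT.
by apply/orP; left; apply/ceqP.
Qed.

Lemma mem_In (A : eqType) (a : A) (l : seq A) : a \in l -> List.In a l.
Proof.
elim: l => [|x l IH] //=; rewrite in_cons => /orP [/eqP ->|H]; [by left|by right; apply IH].
Qed.

Lemma fin_bij (A : Type) : finite_type A -> exists (Q : finType) (f : A -> Q), bijective f.
Proof.
case=> l; case: l => [|x0 l0] Hl.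
  have f : A -> void by move=> a; case: (Hl a).
  exists void, f, (fun v : void => match v with end) => [a|]; [by case: (Hl a)|by case].
set l := x0 :: l0.
have Hh a : has (ceq a) l by apply: In_has; apply: Hl.
have Hlt a : find (ceq a) l < size l by rewrite -has_find.
have Hn a : nth x0 l (find (ceq a) l) = a by apply/esym/ceqP/nth_find.
pose P := fun i : 'I_(size l) => find (ceq (nth x0 l i)) l == i.
have Hc a : P (Ordinal (Hlt a)) by rewrite /P /= Hn.
exists ({i : 'I_(size l) | P i} : finType).
exists (fun a => exist _ (Ordinal (Hlt a)) (Hc a)).
exists (fun q => nth x0 l (val (sval q))).
  by move=> a /=; apply: Hn.
case=> i Hi; apply: val_inj; apply: val_inj => /=.
exact/eqP.
Qed.

Lemma bij_of_inj_surj (A B : Type) (f : A -> B) :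
  injective f -> (forall b, exists a, f a = b) -> bijective f.
Proof.
move=> inj H.
pose g b := proj1_sig (constructive_indefinite_description _ (H b)).
exists g => [a|b]; last by rewrite /g; case: constructive_indefinite_description.
by apply: inj; rewrite /g; case: constructive_indefinite_description.
Qed.

Lemma finite_surj (A B : Type) (h : A -> B) :
  (forall b, exists a, h a = b) -> finite_type A -> finite_type B.
Proof.
move=> Hs [l Hl]; exists (List.map h l) => b.
case: (Hs b) => a <-; exact: List.in_map.
Qed.

Lemma finite_fin (A : finType) : finite_type A.
Proof. by exists (enum A) => x; apply: mem_In; rewrite mem_enum. Qed.

Lemma finite_inj (A B : Type) (i : B -> A) :
  injective i -> finite_type A -> finite_type B.
Proof.
move=> inj [l Hl].
pose pick a := match excluded_middle_informative (exists b, i b = a) with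
  | left H => Some (proj1_sig (constructive_indefinite_description _ H))
  | right _ => None end.
have Hp b : pick (i b) = Some b.
  rewrite /pick; case: excluded_middle_informative => [H|[]]; last by exists b.
  by case: constructive_indefinite_description => b' /= /inj ->.
have In_pmap (a : A) b (s : seq A) : pick a = Some b -> List.In a s -> List.In b (pmap pick s).
  clearbody pick.
  move=> Ha; elim: s => [|x s IH] //= [E|H]; first by subst x; rewrite Ha; left.
  by case: (pick x) => [y|] /=; [right|]; apply: IH.
exists (pmap pick l) => b; apply: (In_pmap (i b)) => //; exact: Hl.
Qed.

Lemma finite_sigma (I : finType) (B : I -> Type) :
  (forall i, finite_type (B i)) -> finite_type {i : I & B i}.
Proof.
move=> H.
pose la i := proj1_sig (constructive_indefinite_description _ (H i)).
exists (List.flat_map (fun i => List.map (existT B i) (la i)) (enum I)).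
case=> i x; apply/List.in_flat_map; exists i; split.
  by apply: mem_In; rewrite mem_enum.
apply: List.in_map; rewrite /la; case: constructive_indefinite_description => l /=; exact.
Qed.

Section PathLemmas.
Variables (Sigma : Type) (Q T : finType) (delta : T -> Q * Sigma * Q).

Definition pend (q : Q) (s : seq T) : Q := last q (map (ttgt delta) s).

Lemma is_path_catE q q' s1 s2 :
  is_path delta q (s1 ++ s2) q' =
  is_path delta q s1 (pend q s1) && is_path delta (pend q s1) s2 q'.
Proof.
elim: s1 q => [|t s1 IH] q /=; first by rewrite eqxx.
by rewrite IH andbA.
Qed.

Lemma is_path_end q q' s : is_path delta q s q' -> q' = pend q s.
Proof.
elim: s q => [|t s IH] q /=; first by move/eqP.
by case/andP=> _ /IH.
Qed.
End PathLemmas.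

Lemma bwd (Sigma : finType) (C : Category) (p : Functor C (FB Sigma))
  (Q T : finType) (delta : T -> Q * Sigma * Q) (F : Functor C (FreeAut delta)) :
  isomorphism F ->
  (forall (X Y : Ob C) (f : Hom X Y), fmor (AutFunctor delta) (fmor F f) = fmor p f) ->
  ULF p /\ finitary p.
Proof.
move=> [[g FgK gFK] Hhom] Hc.
have Finj : injective (fob F) by apply: can_inj FgK.
have Fminj X Y : injective (@fmor _ _ F X Y) by apply: bij_inj.
have HcL X Y (f : Hom X Y) : map (tlbl delta) (proj1_sig (fmor F f)) = fmor p f by apply: Hc.
split.
  move=> X Y alpha u v H.
  set s := proj1_sig (fmor F alpha).
  have Hs : map (tlbl delta) s = u ++ v by rewrite HcL.
  set n := size u.
  set Z' := pend delta (fob F X) (take n s).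
  have Hp : is_path delta (fob F X) s (fob F Y) := proj2_sig (fmor F alpha).
  have Hp2 := Hp; rewrite -[s](cat_take_drop n) is_path_catE in Hp2.
  case/andP: Hp2 => Hp1 Hp2.
  set Z := g Z'.
  have HZ : fob F Z = Z' by rewrite /Z gFK.
  have Hp1' : is_path delta (fob F X) (take n s) (fob F Z) by rewrite HZ.
  have Hp2' : is_path delta (fob F Z) (drop n s) (fob F Y) by rewrite HZ.
  case: (Hhom X Z) => ib ibK1 ibK2.
  case: (Hhom Z Y) => ic icK1 icK2.
  pose beta := ib (exist (fun s0 => is_path delta (fob F X) s0 (fob F Z)) (take n s) Hp1' : Hom (fob F X) (fob F Z)).
  pose gamma := ic (exist (fun s0 => is_path delta (fob F Z) s0 (fob F Y)) (drop n s) Hp2' : Hom (fob F Z) (fob F Y)).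
  have Fb : proj1_sig (fmor F beta) = take n s by rewrite /beta ibK2.
  have Fg : proj1_sig (fmor F gamma) = drop n s by rewrite /gamma icK2.
  exists (existT _ Z (beta, gamma)); split.
    split => /=.
    - apply: Fminj; rewrite fmor_comp; apply: fpath_eq => /=.
      by rewrite Fb Fg cat_take_drop.
    - by rewrite -HcL Fb map_take Hs take_size_cat.
    - by rewrite -HcL Fg map_drop Hs drop_size_cat.
  case=> Z2 [b2 c2] /= [Hbc Hb2 Hc2].
  have E1 : proj1_sig (fmor F b2) ++ proj1_sig (fmor F c2) = s.
    by rewrite /s -Hbc fmor_comp.
  have Sz : size (proj1_sig (fmor F b2)) = n by rewrite -(size_map (tlbl delta)) HcL Hb2.
  have Eb : proj1_sig (fmor F b2) = take n s by rewrite -E1 -Sz take_size_cat.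
  have Ec : proj1_sig (fmor F c2) = drop n s by rewrite -E1 -Sz drop_size_cat.
  have EZ : Z2 = Z.
    apply: Finj; rewrite HZ /Z' -Eb; apply: is_path_end; exact: (proj2_sig (fmor F b2)).
  subst Z2.
  have -> : b2 = beta by apply: Fminj; apply: fpath_eq; rewrite Eb Fb.
  have -> : c2 = gamma by apply: Fminj; apply: fpath_eq; rewrite Ec Fg.
  by [].
split.
  move=> A; apply: (@finite_inj _ _ (fun x : {X : Ob C | fob p X = A} => fob F (sval x))); last first.
    exact: finite_fin.
  case=> X HX [Y HY] /= /Finj E; subst Y.
  by rewrite (eq_irrelevance HX HY).
move=> w.
apply: (@finite_inj (Q * Q * option ((size w).-tuple T))%type _
  (fun x => (fob F (projT1 x), fob F (projT1 (projT2 x)),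
             insub (proj1_sig (fmor F (sval (projT2 (projT2 x))))))));
  last exact: finite_fin.
case=> X [Y [f Hf]] [X' [Y' [f' Hf']]] /= [/Finj EX /Finj EY].
subst X' Y'.
have Sz (h : Hom X Y) : fmor p h = w -> size (proj1_sig (fmor F h)) == size w.
  by move=> <-; rewrite -HcL size_map.
move=> E3.
have : omap val (insub (sval (fmor F f)) : option ((size w).-tuple T)) =
       omap val (insub (sval (fmor F f')) : option ((size w).-tuple T)) by rewrite E3.
case: insubP => [u1 _ E1|]; last by rewrite (Sz _ Hf).
case: insubP => [u2 _ E2|]; last by rewrite (Sz _ Hf').
rewrite /= E1 E2 => -[E].
have Ef : f = f' by apply: Fminj; apply: fpath_eq.
subst f'; by rewrite (eq_irrelevance Hf Hf').
Qed.

Section Fwd.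
Variables (Sigma : finType) (C : Category) (p : Functor C (FB Sigma)).
Hypothesis Hulf : ULF p.

Definition split1 (X Y : Ob C) (f : Hom X Y) : {Z : Ob C & (Hom X Z * Hom Z Y)%type} :=
  proj1_sig (constructive_indefinite_description _
    (@Hulf X Y f (take 1 (fmor p f)) (drop 1 (fmor p f)) (esym (cat_take_drop 1 _)))).

Lemma split1P X Y (f : Hom X Y) :
  [/\ ccomp (projT2 (split1 f)).1 (projT2 (split1 f)).2 = f,
      fmor p (projT2 (split1 f)).1 = take 1 (fmor p f) &
      fmor p (projT2 (split1 f)).2 = drop 1 (fmor p f)].
Proof. rewrite /split1; case: constructive_indefinite_description => bg [H _] /=; exact: H. Qed.

Lemma split1_uniq X Y (f : Hom X Y) Z (b : Hom X Z) (c : Hom Z Y) :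
  ccomp b c = f -> fmor p b = take 1 (fmor p f) -> fmor p c = drop 1 (fmor p f) ->
  split1 f = existT _ Z (b, c).
Proof.
move=> H1 H2 H3; rewrite /split1; case: constructive_indefinite_description => bg [_ U] /=.
by apply: U; split.
Qed.

Definition Edge := {X : Ob C & {Y : Ob C & {f : Hom X Y | size (fmor p f) == 1}}}.
Definition esrc (e : Edge) : Ob C := projT1 e.
Definition etgt (e : Edge) : Ob C := projT1 (projT2 e).

Definition mkE X Y (f : Hom X Y) : option Edge :=
  omap (fun g => existT _ X (existT _ Y g))
       (insub f : option {g : Hom X Y | size (fmor p g) == 1}).

Fixpoint decn (n : nat) X Y (f : Hom X Y) : seq Edge :=
  match n with
  | 0 => [::]
  | n'.+1 => let: existT Z (b, c) := split1 f in
             (match mkE b with Some e => [:: e] | None => [::] end) ++ decn n' c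
  end.

Definition dec X Y (f : Hom X Y) := decn (size (fmor p f)) f.

Definition hd1 (s : seq Sigma) : size s == 1 -> Sigma :=
  match s with
  | [::] => fun H => False_rect _ (Bool.diff_false_true H)
  | a :: _ => fun _ => a end.

Definition lbl (e : Edge) : Sigma :=
  let: existT _ (existT _ (exist f H)) := e in hd1 H.

Lemma lblE X Y (f : Hom X Y) (H : size (fmor p f) == 1) :
  [:: lbl (existT _ X (existT _ Y (exist _ f H)))] = fmor p f.
Proof. rewrite /=; move: H; case: (fmor p f) => [|a [|]] //. Qed.

Lemma nil_eq X Y (f : Hom X Y) : fmor p f = [::] -> Y = X.
Proof.
move=> Hf; case: (@Hulf X _ f [::] [::] Hf) => bg [_ U].
have e1 := U (existT _ Y (f, cid Y)).
have e2 := U (existT _ X (cid X, f)).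
have := congr1 (@projT1 _ _) (etrans (esym (e1 _)) (e2 _)); apply.
  by split => //=; rewrite ?ccomp_id_l ?ccomp_id_r ?fmor_id.
by split => //=; rewrite ?ccomp_id_l ?ccomp_id_r ?fmor_id.
Qed.

Lemma nil_id X (f : Hom X X) : fmor p f = [::] -> f = cid X.
Proof.
move=> Hf; case: (@Hulf X _ f [::] [::] Hf) => bg [_ U].
have e1 := U (existT _ X (f, cid X)).
have e2 := U (existT _ X (cid X, f)).
have := congr1 fst (inj_pairT2 _ _ _ _ _ (etrans (esym (e1 _)) (e2 _))); apply.
  by split => //=; rewrite ?ccomp_id_l ?ccomp_id_r ?fmor_id.
by split => //=; rewrite ?ccomp_id_l ?ccomp_id_r ?fmor_id.
Qed.

Lemma dec_nil X Y (f : Hom X Y) : fmor p f = [::] -> dec f = [::].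
Proof. by rewrite /dec => ->. Qed.

Lemma dec_cons X Y (f : Hom X Y) a w Z (b : Hom X Z) (c : Hom Z Y) (Hb : size (fmor p b) == 1) :
  fmor p f = a :: w -> ccomp b c = f -> fmor p b = [:: a] -> fmor p c = w ->
  dec f = existT _ X (existT _ Z (exist _ b Hb)) :: dec c.
Proof.
move=> Hf Hbc Hpb Hpc.
have E : split1 f = existT _ Z (b, c).
  by apply: split1_uniq; rewrite // ?Hf ?Hpb ?Hpc /= ?take0 ?drop0.
have Hs : size (fmor p f) = (size w).+1 by rewrite Hf.
rewrite /dec Hs /= E /mkE (@insubT _ (fun g : Hom X Z => size (fmor p g) == 1) _ b Hb) /= Hpc.
by [].
Qed.

Lemma split_ex X Y (f : Hom X Y) a w : fmor p f = a :: w ->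
  exists Z (b : Hom X Z) (c : Hom Z Y),
    [/\ ccomp b c = f, fmor p b = [:: a] & fmor p c = w].
Proof.
move=> Hf; case: (split1P f) => H1 H2 H3.
exists (projT1 (split1 f)), (projT2 (split1 f)).1, (projT2 (split1 f)).2.
by split => //; [rewrite H2 | rewrite H3]; rewrite Hf /= ?take0 ?drop0.
Qed.

Lemma decL X Y (f : Hom X Y) : map lbl (dec f) = fmor p f.
Proof.
have [n Hn] : exists n, size (fmor p f) = n by eexists.
elim: n X f Hn => [|n IH] X f Hn.
  have Hf : fmor p f = [::] by apply/size0nil.
  by rewrite (dec_nil Hf) Hf.
case Ef: (fmor p f) Hn => [|a w] //= [Hw].
case: (split_ex Ef) => Z [b [c [Hbc Hb Hc]]].
have Hb1 : size (fmor p b) == 1 by rewrite Hb.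
rewrite (dec_cons Hb1 Ef Hbc Hb Hc) map_cons IH ?Hc //.
by case: (etrans (lblE Hb1) Hb) => E; rewrite /= E.
Qed.

Fixpoint chain (X : Ob C) (s : seq Edge) (Y : Ob C) : Prop :=
  match s with
  | [::] => X = Y
  | e :: s' => esrc e = X /\ chain (etgt e) s' Y
  end.

Lemma dec_chain X Y (f : Hom X Y) : chain X (dec f) Y.
Proof.
have [n Hn] : exists n, size (fmor p f) = n by eexists.
elim: n X f Hn => [|n IH] X f Hn.
  have Hf : fmor p f = [::] by apply/size0nil.
  by rewrite (dec_nil Hf) /=; apply: esym (nil_eq Hf).
case Ef: (fmor p f) Hn => [|a w] //= [Hw].
case: (split_ex Ef) => Z [b [c [Hbc Hb Hc]]].
have Hb1 : size (fmor p b) == 1 by rewrite Hb.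
rewrite (dec_cons Hb1 Ef Hbc Hb Hc) /=; split => //.
by apply: IH; rewrite Hc.
Qed.

Lemma dec_comp X Y Z (f : Hom X Y) (g : Hom Y Z) : dec (ccomp f g) = dec f ++ dec g.
Proof.
have [n Hn] : exists n, size (fmor p f) = n by eexists.
elim: n X f Hn => [|n IH] X f Hn.
  have Hf : fmor p f = [::] by apply/size0nil.
  have E := nil_eq Hf; subst Y.
  by rewrite (dec_nil Hf) (nil_id Hf) ccomp_id_l.
case Ef: (fmor p f) Hn => [|a w] //= [Hw].
case: (split_ex Ef) => Z' [b [c [Hbc Hb Hc]]].
have Hb1 : size (fmor p b) == 1 by rewrite Hb.
have Ef' : fmor p (ccomp f g) = a :: (w ++ fmor p g) by rewrite fmor_comp Ef.
have Hbc' : ccomp b (ccomp c g) = ccomp f g by rewrite -ccomp_assoc Hbc.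
have Hc' : fmor p (ccomp c g) = w ++ fmor p g by rewrite fmor_comp Hc.
rewrite (dec_cons Hb1 Ef Hbc Hb Hc) (dec_cons Hb1 Ef' Hbc' Hb Hc') IH //.
by rewrite Hc.
Qed.

Lemma dec_inj X Y (f g : Hom X Y) : dec f = dec g -> f = g.
Proof.
have [n Hn] : exists n, size (fmor p f) = n by eexists.
elim: n X f g Hn => [|n IH] X f g Hn E.
  have Hf : fmor p f = [::] by apply/size0nil.
  have Hg : fmor p g = [::] by rewrite -(decL g) -E (dec_nil Hf).
  have EY := nil_eq Hf; subst Y.
  by rewrite (nil_id Hf) (nil_id Hg).
case Ef: (fmor p f) Hn => [|a w] //= [Hw].
have Eg : fmor p g = a :: w by rewrite -(decL g) -E decL.
case: (split_ex Ef) => Z [b [c [Hbc Hb Hc]]].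
case: (split_ex Eg) => Z2 [b2 [c2 [Hbc2 Hb2 Hc2]]].
have Hb1 : size (fmor p b) == 1 by rewrite Hb.
have Hb21 : size (fmor p b2) == 1 by rewrite Hb2.
rewrite (dec_cons Hb1 Ef Hbc Hb Hc) (dec_cons Hb21 Eg Hbc2 Hb2 Hc2) in E.
have E2 : dec c = dec c2 := congr1 behead E.
have E1 := congr1 (head (existT _ X (existT _ Z (exist _ b Hb1)))) E; simpl in E1.
have E3 := inj_pairT2 _ _ _ _ _ E1.
have EZ := congr1 (@projT1 _ _) E3; simpl in EZ; subst Z2.
have E4 := inj_pairT2 _ _ _ _ _ E3.
have Eb := congr1 sval E4; simpl in Eb; subst b2.
by rewrite -Hbc -Hbc2 (IH _ c c2) // Hc.
Qed.

Lemma chain_surj (s : seq Edge) X Y : chain X s Y -> exists f : Hom X Y, dec f = s.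
Proof.
elim: s X => [|e s IH] X /=.
  move=> E; subst Y; exists (cid X); apply: dec_nil; exact: fmor_id.
case: e => X' [Z [b Hb]] /= [EX Hch]; subst X'.
case: (IH Z Hch) => c Ec.
exists (ccomp b c); rewrite dec_comp Ec.
have Hb' := Hb.
case Eb: (fmor p b) Hb' => [|a [|]] // _.
have Hid : fmor p (cid Z) = [::] by exact: fmor_id.
by rewrite (dec_cons Hb Eb (ccomp_id_r b) Eb Hid) (dec_nil Hid).
Qed.

Lemma sz1 X Y (f : Hom X Y) a : fmor p f = [:: a] -> size (fmor p f) == 1.
Proof. by move->. Qed.

Definition conv (x : {a : Sigma & {X : Ob C & {Y : Ob C & {f : Hom X Y | fmor p f = [:: a]}}}}) : Edge :=
  let: existT a (existT X (existT Y (exist f H))) := x in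
  existT _ X (existT _ Y (exist _ f (sz1 H))).

Lemma edge_fin : finitary p -> finite_type Edge.
Proof.
move=> [_ H2]; apply: (@finite_surj _ _ conv).
  case=> X [Y [f Hf]].
  have Hf' := Hf.
  case Ef: (fmor p f) Hf' => [|a [|]] // _.
  exists (existT _ a (existT _ X (existT _ Y (exist _ f Ef)))) => /=.
  by rewrite (bool_irrelevance (sz1 Ef) Hf).
by apply: finite_sigma => a; apply: H2.
Qed.

Lemma ob_fin : finitary p -> finite_type (Ob C).
Proof.
move=> [H1 _]; apply: (@finite_surj _ _ (fun x : {X : Ob C | fob p X = tt} => sval x)).
  move=> X; have E : fob p X = tt by case: (fob p X).
  by exists (exist _ X E).
  exact: H1.
Qed.
End Fwd.

Unset Implicit Arguments.
Set Strict Implicit.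

Theorem mainTheorem3 (Sigma : finType) (C : Category) (p : Functor C (FB Sigma)) :
  (ULF p /\ finitary p) <->
  exists (Q T : finType) (delta : T -> Q * Sigma * Q)
         (F : Functor C (FreeAut delta)),
    isomorphism F /\
    forall (X Y : Ob C) (f : Hom X Y), fmor (AutFunctor delta) (fmor F f) = fmor p f.
Proof.
split; last first.
  by case=> Q [T [delta [F [HF Hc]]]]; apply: (bwd HF Hc).
move=> [Hulf Hfin].
have [Q [fQ [gQ fQK gQK]]] := fin_bij (ob_fin Hfin).
have [T [fE [gE fEK gEK]]] := fin_bij (edge_fin Hfin).
pose delta : T -> Q * Sigma * Q := fun t => (fQ (esrc (gE t)), lbl (gE t), fQ (etgt (gE t))).
have fQinj : injective fQ := can_inj fQK.
have chain_path s X Y : chain X s Y -> is_path delta (fQ X) (map fE s) (fQ Y).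
  elim: s X => [|e s IH] X /=; first by move->.
  move=> [E H]; apply/andP; split; first by rewrite /tsrc /= fEK E.
  by have := IH _ H; rewrite /ttgt /= fEK.
have path_chain s X Y : is_path delta (fQ X) s (fQ Y) -> chain X (map gE s) Y.
  elim: s X => [|t s IH] X /=; first by move/eqP/fQinj.
  case/andP => /eqP E H; split; first by apply: fQinj; rewrite -E.
  by apply: IH.
have Fmor X Y (f : Hom X Y) : is_path delta (fQ X) (map fE (dec Hulf f)) (fQ Y).
  exact: chain_path (dec_chain Hulf f).
exists Q, T, delta.
unshelve eexists (@Build_Functor C (FreeAut delta) fQ
  (fun X Y f => exist (fun s => is_path delta (fQ X) s (fQ Y)) (map fE (dec Hulf f)) (Fmor X Y f)) _ _).
- move=> X; apply: fpath_eq => /=; rewrite dec_nil //; exact: fmor_id.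
- by move=> X Y Z f g; apply: fpath_eq => /=; rewrite dec_comp map_cat.
split.
  split; first by exists gQ.
  move=> X Y; apply: bij_of_inj_surj.
    move=> f g /(congr1 sval) /= /(congr1 (map gE)); rewrite !(mapK fEK).
    exact: dec_inj.
  case=> s Hs; have [f Hf] := chain_surj Hulf (path_chain _ _ _ Hs).
  by exists f; apply: fpath_eq => /=; rewrite Hf (mapK gEK).
move=> X Y f /=; rewrite /aut_mor /= -map_comp -(decL Hulf f).
by apply: eq_map => e /=; rewrite /tlbl /delta /= fEK.
Qed.
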